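(* Let $(S,\|\cdot\|)$ be a complete $RN$ module over $K$ with base $(\Omega,\mathcal F,P)$, let $\{T(t):t\geq 0\}$ be an a.s. bounded $C_{0}$--semigroup on $S$ with infinitesimal generator $(A,D(A))$. Given $x\in D(A)$, define $f:[0,+\infty)\to S$ by $f(t)=T(t)x$. Then for every $x\in D(A)$ and every real $r>0$, $f$ is $L^{0}$-Lipschitz on $[0,r]$, i.e. there exists $\xi\in L^0_+(\mathcal F)$ with $\|f(t_1)-f(t_2)\|\le \xi|t_1-t_2|$ for all $t_1,t_2\in[0,r]$.
   Context: $(\Omega,\mathcal F,P)$ is a probability space; $L^{0}(\mathcal F,K)$ ($K=R$ or $C$) is the algebra of equivalence classes of $K$-valued $\mathcal F$-measurable random variables, ordered a.s.; $L^{0}_{+}(\mathcal F)=\{\xi\in L^0(\mathcal F,R):\xi\ge 0\}$. Suprema are taken in the complete lattice of extended random variables. An $RN$ module over $K$ with base $(\Omega,\mathcal F,P)$ is a left $L^0(\mathcal F,K)$-module $S$ with a map $\|\cdot\|:S\to L^0_+(\mathcal F)$ such that $\|\xi x\|=|\xi|\|x\|$, $\|x+y\|\le\|x\|+\|y\|$, and $\|x\|=0$ implies $x=0$; it carries the $(\varepsilon,\lambda)$-topology, in which $x_n\to x$ iff $\|x_n-x\|\to0$ in probability; completeness refers to this topology. $B(S)$ is the set of continuous module homomorphisms $S\to S$ (equivalently $\|Tx\|\le \xi\|x\|$ for some $\xi\in L^0_+(\mathcal F)$), with $\|T\|=\bigwedge\{\xi\in L^0_+(\mathcal F):\|Tx\|\le\xi\|x\|\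 \forall x\}$. A $C_0$--semigroup is $\{T(t):t\ge0\}\subset B(S)$ with $T(0)=I$, $T(s)T(t)=T(s+t)$, $\lim_{t\downarrow0}T(t)x=x$ for all $x$. It is a.s. bounded if there is a real $L>0$ with $\bigvee_{t\in[0,L]}\|T(t)\|\in L^0_+(\mathcal F)$. Its infinitesimal generator is $Ax=\lim_{t\downarrow0}\frac{T(t)x-x}{t}$ on $D(A)=\{x:\text{the limit exists}\}$. *)

(* Defs.v *)
From HB Require Import structures.
From mathcomp Require Import all_boot all_order all_algebra.
From mathcomp Require Import all_classical all_reals all_analysis measurable_realfun.
From mathcomp Require complex.
Import complex.ComplexField.
Import Order.TTheory GRing.Theory Num.Theory.
Set Implicit Arguments.
Unset Strict Implicit.
Unset Printing Implicit Defensive.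
Local Open Scope classical_set_scope.
Local Open Scope ring_scope.

(* L^0(F,K) is modelled by measurable functions Omega -> K taken modulo
   P-a.s. equality; K = C is modelled by (complex R), K = R by the complex
   valued functions with vanishing imaginary part (flag isC = false). *)

Section RN.
Context {d : measure_display} {Omega : measurableType d} {R : realType}.
Variable P : probability Omega R.
Local Notation C := (complex.complex R).

Definition Kval (isC : bool) (xi : Omega -> C) : Prop :=
  [/\ measurable_fun setT (fun w => complex.Re (xi w)),
      measurable_fun setT (fun w => complex.Im (xi w)) &
      (~~ isC -> forall w, complex.Im (xi w) = 0)].

Definition L0pos (xi : Omega -> R) : Prop :=
  measurable_fun setT xi /\ (forall w, 0 <= xi w).

Definition cstK (t : R) : Omega -> C := fun _ => complex.Complex t 0.

Section Module.
Variables (isC : bool) (S : zmodType)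
  (smul : (Omega -> C) -> S -> S) (nrm : S -> Omega -> R).

(* (S, nrm) is an RN module over K with base (Omega, F, P):
   a left L^0(F,K)-module (scalar action well defined on a.s.-classes)
   with an L^0_+-valued norm satisfying the RN-module axioms a.s. *)
Definition is_RN_module : Prop :=
  (forall xi x y, Kval isC xi -> smul xi (x + y) = smul xi x + smul xi y) /\
  (forall xi eta x, Kval isC xi -> Kval isC eta ->
      smul (fun w => xi w + eta w) x = smul xi x + smul eta x) /\
  (forall xi eta x, Kval isC xi -> Kval isC eta ->
      smul (fun w => xi w * eta w) x = smul xi (smul eta x)) /\
  (forall x, smul (fun _ => 1) x = x) /\
  (forall xi eta x, Kval isC xi -> Kval isC eta ->
      {ae P, forall w, xi w = eta w} -> smul xi x = smul eta x) /\
  (forall x, measurable_fun setT (nrm x) /\ {ae P, forall w, 0 <= nrm x w}) /\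
  (forall xi x, Kval isC xi ->
      {ae P, forall w, nrm (smul xi x) w = complex.ComplexField.Normc.normc (xi w) * nrm x w}) /\
  (forall x y, {ae P, forall w, nrm (x + y) w <= nrm x w + nrm y w}) /\
  (forall x, {ae P, forall w, nrm x w = 0} -> x = 0).

(* (eps,lambda)-topology: convergence in probability of the norm *)
Definition cvg_seq (u : nat -> S) (y : S) : Prop :=
  forall eps lam : R, 0 < eps -> 0 < lam ->
  exists N : nat, forall n, (N <= n)%N ->
    (P [set w | (eps < nrm (u n - y) w)%R] < lam%:E)%E.

Definition cauchy_seq (u : nat -> S) : Prop :=
  forall eps lam : R, 0 < eps -> 0 < lam ->
  exists N : nat, forall m n, (N <= m)%N -> (N <= n)%N ->
    (P [set w | (eps < nrm (u n - u m) w)%R] < lam%:E)%E.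

Definition RN_complete : Prop :=
  forall u, cauchy_seq u -> exists y, cvg_seq u y.

Definition lim_right0 (F : R -> S) (y : S) : Prop :=
  forall eps lam : R, 0 < eps -> 0 < lam ->
  exists2 delta : R, 0 < delta & forall t, 0 < t -> t < delta ->
    (P [set w | (eps < nrm (F t - y) w)%R] < lam%:E)%E.

Definition bounded_op (T : S -> S) : Prop :=
  (forall xi eta x y, Kval isC xi -> Kval isC eta ->
      T (smul xi x + smul eta y) = smul xi (T x) + smul eta (T y)) /\
  exists xi, L0pos xi /\
    forall x, {ae P, forall w, nrm (T x) w <= xi w * nrm x w}.

Definition is_ess_sup (I : Type) (D : set I) (F : I -> Omega -> \bar R)
  (s : Omega -> \bar R) : Prop :=
  measurable_fun setT s /\
  (forall i, D i -> {ae P, forall w, (F i w <= s w)%E}) /\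
  (forall u, measurable_fun setT u ->
     (forall i, D i -> {ae P, forall w, (F i w <= u w)%E}) ->
     {ae P, forall w, (s w <= u w)%E}).

Definition is_ess_inf (I : Type) (D : set I) (F : I -> Omega -> \bar R)
  (s : Omega -> \bar R) : Prop :=
  measurable_fun setT s /\
  (forall i, D i -> {ae P, forall w, (s w <= F i w)%E}) /\
  (forall u, measurable_fun setT u ->
     (forall i, D i -> {ae P, forall w, (u w <= F i w)%E}) ->
     {ae P, forall w, (u w <= s w)%E}).

Definition is_op_norm (T : S -> S) (n : Omega -> \bar R) : Prop :=
  is_ess_inf
    (fun xi : Omega -> R => L0pos xi /\
       forall x, {ae P, forall w, nrm (T x) w <= xi w * nrm x w})
    (fun xi w => (xi w)%:E) n.

(* C_0-semigroup (T t only matters for t >= 0) *)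
Definition C0_semigroup (T : R -> S -> S) : Prop :=
  (forall t, 0 <= t -> bounded_op (T t)) /\
  (forall x, T 0 x = x) /\
  (forall s t x, 0 <= s -> 0 <= t -> T s (T t x) = T (s + t) x) /\
  (forall x, lim_right0 (fun t => T t x) x).

Definition as_bounded (T : R -> S -> S) : Prop :=
  exists L : R, 0 < L /\
  exists (n : R -> Omega -> \bar R) (s : Omega -> \bar R),
    (forall t, 0 <= t <= L -> is_op_norm (T t) (n t)) /\
    is_ess_sup [set t | 0 <= t <= L] n s /\
    {ae P, forall w, (s w < +oo)%E}.

Definition in_gen_domain (T : R -> S -> S) (x : S) : Prop :=
  exists y, lim_right0 (fun t => smul (cstK t^-1) (T t x - x)) y.

End Module.
End RN.

(* Main.v *)
Set Warnings "-all".
Require Import Defs.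
From HB Require Import structures.
From mathcomp Require Import all_boot all_order all_algebra.
From mathcomp Require Import all_classical all_reals all_analysis measurable_realfun.
From mathcomp Require Import ring.
From mathcomp Require complex.
Import complex.ComplexField.
Import Order.TTheory GRing.Theory Num.Theory.
Local Open Scope classical_set_scope.
Local Open Scope ring_scope.

Section Basics.
Context {d : measure_display} {Omega : measurableType d} {R : realType}.
Variable P : probability Omega R.
Variables (isC : bool) (S : zmodType)
  (smul : (Omega -> complex.complex R) -> S -> S) (nrm : S -> Omega -> R).
Hypothesis HM : is_RN_module P isC smul nrm.

Local Notation cstK := (@Defs.cstK _ Omega R).
Lemma Kval_cstK (t : R) : Kval isC (cstK t).
Proof. by split => //=; exact: measurable_cst. Qed.

Lemma cstK_add (t u : R) : (fun w => cstK t w + cstK u w) = cstK (t + u).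
Proof. by apply: funext => w; rewrite /cstK /=; congr complex.Complex; rewrite addr0. Qed.

Lemma cstK_mul (t u : R) : (fun w => cstK t w * cstK u w) = cstK (t * u).
Proof.
apply: funext => w; rewrite /cstK /=; congr complex.Complex.
  by rewrite mulr0 subr0. by rewrite mulr0 mul0r addr0.
Qed.

Lemma smul_add t u y : smul (cstK (t + u)) y = smul (cstK t) y + smul (cstK u) y.
Proof.
case: HM => _ [H2 _]; rewrite -cstK_add; apply: H2; exact: Kval_cstK.
Qed.

Lemma smul_mul t u y : smul (cstK (t * u)) y = smul (cstK t) (smul (cstK u) y).
Proof.
case: HM => _ [_ [H3 _]]; rewrite -cstK_mul; apply: H3; exact: Kval_cstK.
Qed.

Lemma smul1 y : smul (cstK 1) y = y.
Proof. by case: HM => _ [_ [_ [H4 _]]]; exact: H4. Qed.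

Lemma smul0 y : smul (cstK 0) y = 0.
Proof.
have := smul_add 0 0 y; rewrite addr0 => h.
apply: (@addrI _ (smul (cstK 0) y)); rewrite addr0; exact: esym.
Qed.

Lemma smulN1 y : smul (cstK (-1)) y = - y.
Proof.
have := smul_add 1 (-1) y; rewrite subrr smul0 smul1 => h.
apply: (@addrI _ y); rewrite subrr; exact: esym.
Qed.

Lemma normc_cstK (t : R) (w : Omega) : Normc.normc (cstK t w) = `|t|.
Proof. by rewrite /cstK /Normc.normc expr0n /= addr0 sqrtr_sqr. Qed.

Lemma nrm_smul t y : {ae P, forall w, nrm (smul (cstK t) y) w = `|t| * nrm y w}.
Proof.
case: HM => _ [_ [_ [_ [_ [_ [H7 _]]]]]].
by apply: filterS (H7 _ y (Kval_cstK t)) => w ->; rewrite normc_cstK.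
Qed.

Lemma nrm_ge0 y : {ae P, forall w, 0 <= nrm y w}.
Proof. by case: HM => _ [_ [_ [_ [_ [H6 _]]]]]; case: (H6 y). Qed.

Lemma nrm_meas y : measurable_fun setT (nrm y).
Proof. by case: HM => _ [_ [_ [_ [_ [H6 _]]]]]; case: (H6 y). Qed.

Lemma nrm_tri y z : {ae P, forall w, nrm (y + z) w <= nrm y w + nrm z w}.
Proof. by case: HM => _ [_ [_ [_ [_ [_ [_ [H8 _]]]]]]]; exact: H8. Qed.

Lemma nrm_opp y : {ae P, forall w, nrm (- y) w = nrm y w}.
Proof.
by apply: filterS (nrm_smul (-1) y) => w; rewrite smulN1 normrN normr1 mul1r.
Qed.

Lemma nrm_subC y z : {ae P, forall w, nrm (y - z) w = nrm (z - y) w}.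
Proof. by apply: filterS (nrm_opp (z - y)) => w; rewrite opprB. Qed.

Lemma nrm0 : {ae P, forall w, nrm 0 w = 0}.
Proof. by apply: filterS (nrm_smul 0 0) => w; rewrite smul0 normr0 mul0r. Qed.


Lemma T_sub (Tt : S -> S) : bounded_op P isC smul nrm Tt ->
  forall a b, Tt (a - b) = Tt a - Tt b.
Proof.
move=> [lin _] a b.
have := lin (cstK 1) (cstK (-1)) a b (Kval_cstK 1) (Kval_cstK (-1)).
by rewrite !smul1 !smulN1.
Qed.

Lemma opnorm_bound (Tt : S -> S) (n : Omega -> \bar R) :
  bounded_op P isC smul nrm Tt -> is_op_norm P nrm Tt n ->
  forall y, {ae P, forall w, forall M : R, (n w <= M%:E)%E ->
     nrm (Tt y) w <= M * nrm y w}.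
Proof.
move=> [_ [xi0 [xi0p Hxi0]]] [_ [_ glb]] y.
pose u := fun w => nrm (Tt y) w * (`|nrm y w|) `^ (-1).
have mu : measurable_fun setT (fun w => (u w)%:E).
  apply/measurable_EFinP; apply: measurable_funM; first exact: nrm_meas.
  exact: (measurableT_comp (measurable_powR (-1))
    (measurableT_comp (@normr_measurable R setT) (nrm_meas y))).
have H1 : forall xi : Omega -> R, (L0pos xi /\ forall x,
     {ae P, forall w, nrm (Tt x) w <= xi w * nrm x w}) ->
   {ae P, forall w, ((u w)%:E <= (xi w)%:E)%E}.
  move=> xi [[_ xip] Hxi]; apply: filterS2 (Hxi y) (nrm_ge0 y) => w h1 h0.
  rewrite lee_fin /u powR_inv1 ?normr_ge0 // ger0_norm //.
  have [->|yp] := eqVneq (nrm y w) 0.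
    by rewrite invr0 mulr0.
  by rewrite ler_pdivrMr ?lt0r ?yp ?h0.
have := glb _ mu H1.
apply: filterS3 (Hxi0 y) (nrm_ge0 y) => w hy h0' hu M hM.
have [y0|yp] := eqVneq (nrm y w) 0.
  by rewrite y0 mulr0; move: hy; rewrite y0 mulr0.
have : u w <= M by rewrite -lee_fin (le_trans hu hM).
rewrite /u powR_inv1 // ger0_norm // => huM.
have -> : nrm (Tt y) w = (nrm (Tt y) w / nrm y w) * nrm y w by rewrite divfK.
by apply: ler_wpM2r.
Qed.


Lemma unif_bound (T : R -> S -> S) : C0_semigroup P isC smul nrm T ->
  as_bounded P nrm T -> forall r : R, 0 < r ->
  exists N : Omega -> R, measurable_fun setT N /\ (forall w, 1 <= N w) /\
    forall t y, 0 <= t <= r ->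
      {ae P, forall w, nrm (T t y) w <= N w * nrm y w}.
Proof.
move=> [Hb [T0 [Tss Tlim]]] [L [L0 [n [s [Hn [[ms [Hns _]] sfin]]]]]] r r0.
pose M := fun w => Num.max 1 (fine (s w)).
have mM : measurable_fun setT M.
  apply: measurable_maxr; first exact: measurable_cst.
  exact: measurableT_comp (fine_measurable measurableT) ms.
have M1 w : 1 <= M w by rewrite /M le_max lexx.
have M0 w : 0 <= M w by apply: le_trans (M1 w).
have HL : forall t y, 0 <= t <= L ->
    {ae P, forall w, nrm (T t y) w <= M w * nrm y w}.
  move=> t y tL; have [t0 _] := andP tL.
  have := @opnorm_bound (T t) (n t) (Hb t t0) (Hn t tL) y.
  apply: filterS3 (Hns t tL) sfin => w hns hs hb; apply: hb.
  apply: le_trans hns _; move: hs; rewrite /M.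
  case: (s w) => [x| |] //= _; last by rewrite leNye.
  by rewrite lee_fin le_max lexx orbT.
have Hm : forall (m : nat) t y, 0 <= t <= L ->
    {ae P, forall w, nrm (T (m%:R * t) y) w <= M w ^+ m * nrm y w}.
  elim => [|m IH] t y tL.
    by rewrite mul0r T0; apply: aeW => w; rewrite expr0 mul1r.
  have [t0 _] := andP tL.
  have -> : T (m.+1%:R * t) y = T t (T (m%:R * t) y).
    rewrite Tss ?mulr_ge0 //; congr (T _ y).
    by rewrite -natr1 mulrDl mul1r addrC.
  apply: filterS2 (HL t (T (m%:R * t) y) tL) (IH t y tL) => w h1 h2.
  rewrite exprS -mulrA; apply: le_trans h1 _; by rewrite ler_wpM2l.
pose k := (Num.trunc (r / L)).+1.
have kgt : r / L < k%:R by exact: truncnS_gt.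
have k0 : (k%:R : R) != 0 by rewrite pnatr_eq0.
have kp : (0 : R) < k%:R by rewrite ltr0n.
exists (fun w => M w ^+ k); split; first exact: measurable_funX.
split; first by move=> w; exact: exprn_ege1.
move=> t y /andP[t0 tr].
have tL : 0 <= t / k%:R <= L.
  apply/andP; split; first by rewrite divr_ge0 // ltW.
  rewrite ler_pdivrMr //; apply: (le_trans tr).
  have rk : r <= k%:R * L by apply/ltW; rewrite -ltr_pdivrMr.
  by rewrite mulrC.
by have := Hm k (t / k%:R) y tL; rewrite mulrC divfK.
Qed.


Lemma tele_bound (T : R -> S -> S) (N : Omega -> R) (r : R) (x : S) (dl : R) :
  C0_semigroup P isC smul nrm T -> (forall w, 0 <= N w) ->
  (forall t y, 0 <= t <= r -> {ae P, forall w, nrm (T t y) w <= N w * nrm y w}) ->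
  0 <= dl ->
  forall m : nat, m%:R * dl <= r ->
  {ae P, forall w, nrm (T (m%:R * dl) x - x) w <= m%:R * N w * nrm (T dl x - x) w}.
Proof.
move=> [Hb [T0 [Tss _]]] N0 HN dl0; elim => [|m IH] mr.
  by rewrite mul0r T0 subrr; apply: filterS nrm0 => w ->; rewrite !mul0r.
have md0 : 0 <= m%:R * dl by rewrite mulr_ge0.
have mr' : m%:R * dl <= r.
  apply: le_trans mr; rewrite ler_wpM2r // ler_nat //.
have E : T (m.+1%:R * dl) x - x =
   (T (m%:R * dl) x - x) + T (m%:R * dl) (T dl x - x).
  rewrite (@T_sub _ (Hb _ md0)) Tss //.
  have -> : m.+1%:R * dl = m%:R * dl + dl by rewrite -natr1 mulrDl mul1r.
  by rewrite [RHS]addrC addrA subrK.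
rewrite E.
apply: filterS3 (nrm_tri (T (m%:R * dl) x - x) (T (m%:R * dl) (T dl x - x)))
  (IH mr') (HN (m%:R * dl) (T dl x - x) (introT andP (conj md0 mr'))) => w h1 h2 h3.
apply: le_trans h1 _.
rewrite -natr1 !mulrDl mul1r; exact: lerD.
Qed.


Lemma h_bound (T : R -> S -> S) (N : Omega -> R) (r : R) (x y : S) :
  C0_semigroup P isC smul nrm T -> (forall w, 0 <= N w) ->
  (forall t z, 0 <= t <= r -> {ae P, forall w, nrm (T t z) w <= N w * nrm z w}) ->
  lim_right0 P nrm (fun t => smul (cstK t^-1) (T t x - x)) y ->
  forall h, 0 <= h <= r ->
  {ae P, forall w, nrm (T h x - x) w <= N w * h * (`|nrm y w| + 1)}.
Proof.
move=> HC N0 HN Hy h /andP[h0 hr].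
have [->|hp] := eqVneq h 0.
  case: HC => _ [T0 _]; rewrite T0 subrr.
  by apply: filterS nrm0 => w ->; rewrite mulr0 mul0r.
have hpos : 0 < h by rewrite lt0r hp.
pose dl := fun n : nat => h / n.+1%:R.
pose g := fun n : nat => smul (cstK (dl n)^-1) (T (dl n) x - x).
have dlp n : 0 < dl n by rewrite divr_gt0 // ltr0n.
have step : forall n, {ae P, forall w,
    nrm (T h x - x) w <= N w * h * (nrm y w + nrm (g n - y) w)}.
  move=> n.
  have mdl : n.+1%:R * dl n = h by rewrite /dl mulrC divfK // pnatr_eq0.
  have := @tele_bound T N r x (dl n) HC N0 HN (ltW (dlp n)) n.+1.
  rewrite mdl => /(_ hr) H1.
  have E : T (dl n) x - x = smul (cstK (dl n)) (g n).
    by rewrite /g -smul_mul divff ?smul1 // gt_eqF.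
  have H2 := nrm_smul (dl n) (g n); rewrite -E in H2.
  have H3 := nrm_tri y (g n - y); rewrite addrC subrK in H3.
  apply: filterS3 H1 H2 H3 => w h1 h2 h3.
  apply: le_trans h1 _; rewrite h2 gtr0_norm //.
  have -> : n.+1%:R * N w * (dl n * nrm (g n) w) = N w * h * nrm (g n) w.
    by rewrite -mdl; ring.
  by rewrite ler_wpM2l // mulr_ge0 // ltW.
have Hall := ae_foralln step.
have mB k : measurable [set w | 1 < nrm (g k - y) w].
  have := nrm_meas (g k - y) measurableT _ (measurable_itv `]1, +oo[).
  rewrite setTI; congr measurable; apply/seteqP; split => w /=;
    by rewrite in_itv /= andbT.
have Hex : {ae P, forall w, exists n, nrm (g n - y) w <= 1}.
  exists (\bigcap_n [set w | 1 < nrm (g n - y) w]); split.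
  - by apply: bigcap_measurable => [|k _]; [exists 0%N|exact: mB].
  - apply/eqP; rewrite eq_le measure_ge0 andbT; apply/lee_addgt0Pr => lam lam0.
    rewrite add0e.
    have [d0 d0p Hd] := Hy 1 lam ltr01 lam0.
    pose n := Num.trunc (h / d0).
    have hn : h / d0 < n.+1%:R by exact: truncnS_gt.
    have dln : dl n < d0.
      by rewrite /dl ltr_pdivrMr ?ltr0n // mulrC -ltr_pdivrMr.
    apply: le_trans (ltW (Hd _ (dlp n) dln)).
    apply: le_measure; rewrite ?inE.
    + by apply: bigcap_measurable => [|k _]; [exists 0%N|exact: mB].
    + exact: mB.
    + by move=> w /(_ n I).
  - move=> w /= nw k _; rewrite /= ltNge; apply/negP => hk; apply: nw.
    by exists k.
apply: filterS2 Hall Hex => w hall [n hn].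
apply: le_trans (hall n) _; rewrite ler_wpM2l ?mulr_ge0 //.
by apply: lerD => //; exact: ler_norm.
Qed.

End Basics.

Theorem lemma3p7 (d : measure_display) (Omega : measurableType d)
  (R : realType) (P : probability Omega R) (isC : bool) (S : zmodType)
  (smul : (Omega -> complex.complex R) -> S -> S) (nrm : S -> Omega -> R)
  (T : R -> S -> S) :
  is_RN_module P isC smul nrm ->
  RN_complete P nrm ->
  C0_semigroup P isC smul nrm T ->
  as_bounded P nrm T ->
  forall x : S, in_gen_domain P smul nrm T x ->
  let f := fun t : R => T t x in
  forall r : R, 0 < r ->
  exists xi : Omega -> R, L0pos xi /\
    forall t1 t2 : R, 0 <= t1 <= r -> 0 <= t2 <= r ->
      {ae P, forall w, nrm (f t1 - f t2) w <= xi w * `|t1 - t2|}.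
Proof.
move=> HM _ HC HB x [y Hy] f r r0.
have [N [mN [N1 HN]]] := @unif_bound _ _ _ P isC S smul nrm HM T HC HB r r0.
have N0 w : 0 <= N w by apply: le_trans (N1 w).
have Hh := @h_bound _ _ _ P isC S smul nrm HM T N r x y HC N0 HN Hy.
exists (fun w => N w * (N w * (`|nrm y w| + 1))); split.
  split.
    apply: measurable_funM => //; apply: measurable_funM => //.
    apply: measurable_funD; last exact: measurable_cst.
    exact: measurableT_comp (@normr_measurable R setT) (@nrm_meas _ _ _ P isC S smul nrm HM y).
  by move=> w; rewrite !mulr_ge0 // addr_ge0.
have key : forall t1 t2, 0 <= t2 -> t2 <= t1 -> t1 <= r ->
    {ae P, forall w, nrm (f t1 - f t2) w <=
       N w * (N w * (`|nrm y w| + 1)) * (t1 - t2)}.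
  move=> t1 t2 t20 t21 t1r.
  have h0 : 0 <= t1 - t2 by rewrite subr_ge0.
  have E : f t1 - f t2 = T t2 (T (t1 - t2) x - x).
    case: HC => Hb [_ [Tss _]].
    by rewrite (@T_sub _ _ _ P isC S smul nrm HM _ (Hb _ t20)) Tss // (addrC t2) subrK.
  rewrite E.
  have ht : 0 <= t1 - t2 <= r.
    by rewrite h0 /=; apply: le_trans t1r; rewrite lerBlDr lerDl.
  apply: filterS2 (HN t2 (T (t1 - t2) x - x) (introT andP (conj t20 (le_trans t21 t1r))))
    (Hh _ ht) => w h1 h2.
  apply: le_trans h1 _.
  rewrite -mulrA; apply: ler_wpM2l => //.
  by rewrite mulrAC.
move=> t1 t2 /andP[t10 t1r] /andP[t20 t2r].
have [t21|t12] := leP t2 t1.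
  by rewrite ger0_norm ?subr_ge0 //; exact: key.
apply: filterS2 (@nrm_subC _ _ _ P isC S smul nrm HM (f t1) (f t2)) (key _ _ t10 (ltW t12) t2r) => w -> h.
rewrite distrC (ger0_norm (x := t2 - t1)); [exact: h | by rewrite subr_ge0 ltW].
Qed.
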